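(* Let $X$ be a real random variable with density $p$, $\mathbb{E}X=0$, $\mathrm{Var}(X)=1$, and $\mathbb{E}|X|^s<\infty$ for some $s>2$. Then there exist $C_1,C_2,C_3>0$ such that for every $A>0$, \[ D(X)\le C_1e^{A^2/2}\|p-\phi\|_2^2+(C_2+\|p-\phi\|_\infty)\big(\|p-\phi\|_1+e^{-A^2/2}\big)+C_3(\mathbb{E}|X|^s)^{2/s}\big(\|p-\phi\|_1+e^{-A^2/2}\big)^{1-2/s}. \]
   Context: $\phi(x)=(2\pi)^{-1/2}e^{-x^2/2}$ is the standard Gaussian density. For a random variable $X$, $D(X):=\mathrm{KL}(X\|G_X)$, the Kullback–Leibler divergence of $X$ from a Gaussian random variable $G_X$ with the same mean and variance as $X$; here $D(X)=\int p\ln(p/\phi)$. $\|\cdot\|_q$ is the $L^q(\mathbb{R})$ norm with respect to Lebesgue measure. *)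

(* Defs.v *)
From HB Require Import structures.
From mathcomp Require Import all_boot all_order all_algebra.
From mathcomp Require Import all_classical all_reals all_analysis.
Set Implicit Arguments. Unset Strict Implicit. Unset Printing Implicit Defensive.
Import Order.TTheory GRing.Theory Num.Theory.
Import numFieldNormedType.Exports.
Local Open Scope classical_set_scope.
Local Open Scope ring_scope.

Definition gauss_phi {R : realType} (x : R) : R :=
  (Num.sqrt (2 * pi))^-1 * expR (- (x ^+ 2) / 2).

Definition is_density {R : realType} (p : R -> R) : Prop :=
  measurable_fun [set: R] p /\ (forall x, 0 <= p x) /\
  (\int[@lebesgue_measure R]_x (p x)%:E = 1)%E.

(* D(X) = KL(X || G_X) = \int p ln (p / phi)  (with 0 ln 0 = 0) *)
Definition KLgauss {R : realType} (p : R -> R) : \bar R :=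
  (\int[@lebesgue_measure R]_x (p x * ln (p x / gauss_phi x))%:E)%E.

Definition LqR {R : realType} (q : \bar R) (f : R -> R) : \bar R :=
  Lnorm (@lebesgue_measure R) q (fun x => (f x)%:E).

Definition abs_moment {R : realType} (p : R -> R) (s : R) : \bar R :=
  (\int[@lebesgue_measure R]_x ((`|x| `^ s) * p x)%:E)%E.

(* Main.v *)
Require Import Defs.
From HB Require Import structures.
From mathcomp Require Import all_boot all_order all_algebra.
From mathcomp Require Import all_classical all_reals all_analysis.
From mathcomp Require Import ring lra measurable_realfun.
Import Order.TTheory GRing.Theory Num.Theory.
Import numFieldNormedType.Exports.
Local Open Scope classical_set_scope.
Local Open Scope ring_scope.

Lemma SS_ge1 (R : realType) : 1 <= Num.sqrt (2 * pi) :> R.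
Proof.
rewrite -[X in X <= _]sqrtr1 ler_sqrt; last by rewrite mulr_ge0// pi_ge0.
have := pi_ge2 R. lra.
Qed.

Lemma gauss_phi_gt0 (R : realType) (x : R) : 0 < gauss_phi x.
Proof.
rewrite /gauss_phi mulr_gt0 ?expR_gt0// invr_gt0.
by apply: lt_le_trans (SS_ge1 R).
Qed.

Lemma gauss_phi_le1 (R : realType) (x : R) : gauss_phi x <= 1.
Proof.
rewrite /gauss_phi; apply: (@le_trans _ _ (1 * 1)); last by rewrite mulr1.
apply: ler_pM.
- by rewrite invr_ge0 sqrtr_ge0.
- by rewrite expR_ge0.
- by rewrite invf_le1 ?SS_ge1// (lt_le_trans _ (SS_ge1 R)).
- by rewrite expR_le1 mulNr oppr_le0 mulr_ge0 ?sqr_ge0.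
Qed.

Lemma inv_gauss_phi (R : realType) (x : R) :
  (gauss_phi x)^-1 = Num.sqrt (2 * pi) * expR (x ^+ 2 / 2).
Proof.
rewrite /gauss_phi invfM invrK -expRN; congr (_ * expR _).
by rewrite mulNr opprK.
Qed.

Lemma ln_gauss_phi (R : realType) (x : R) :
  ln (gauss_phi x) = - ln (Num.sqrt (2 * pi)) - x ^+ 2 / 2.
Proof.
have S0 : 0 < Num.sqrt (2 * pi) :> R by apply: lt_le_trans (SS_ge1 R).
rewrite /gauss_phi lnM ?posrE ?invr_gt0 ?expR_gt0// lnV ?posrE// expRK.
by rewrite mulNr.
Qed.

Lemma measurable_gauss_phi (R : realType) : measurable_fun [set: R] (@gauss_phi R).
Proof.
apply: measurable_funM => //.
apply: measurableT_comp; first exact: measurable_expR.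
apply: measurable_funM => //.
apply: measurableT_comp => //.
Qed.

Lemma gauss_tail (R : realType) (A x : R) : 0 <= A -> A < `|x| ->
  gauss_phi x <= expR (- (A ^+ 2) / 2) * (normal_pdf A 1 x + normal_pdf (- A) 1 x).
Proof.
move=> A0 Ax.
have e : (Num.sqrt (2 * pi))^-1 = normal_peak (1 : R).
  by rewrite /normal_peak expr1n mul1r mulr2n mulrDl mul1r.
have e2 : (1 : R) ^+ 2 *+ 2 = 2 by rewrite expr1n.
rewrite /normal_pdf oner_eq0 /= /normal_fun e2 /gauss_phi e.
set c := normal_peak 1.
have c0 : 0 <= c by exact: normal_peak_ge0.
rewrite mulrDr !mulrA ![expR _ * c]mulrC -!mulrA -!expRD.
case: (lerP 0 x) => x0.
- rewrite ger0_norm // in Ax.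
  rewrite -mulrDr ler_wpM2l //.
  apply: ler_wpDr; first exact: expR_ge0.
  rewrite ler_expR; nra.
- rewrite ltr0_norm // in Ax.
  rewrite -mulrDr ler_wpM2l //.
  apply: ler_wpDl; first exact: expR_ge0.
  rewrite ler_expR; nra.
Qed.

Lemma pointwise (R : realType) (A al be s P x : R) :
  0 <= A -> 0 <= al -> 0 <= be -> 0 <= P ->
  (A < `|x| -> x ^+ 2 / 2 <= al * `|x| `^ s + be) ->
  P * ln (P / gauss_phi x) <=
    (Num.sqrt (2 * pi) * expR (A ^+ 2 / 2) + 2) * (P - gauss_phi x) ^+ 2
  + (1 + Num.sqrt (2 * pi) + be) * `|P - gauss_phi x|
  + (2 + Num.sqrt (2 * pi) + be) * (expR (- (A ^+ 2) / 2) *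
        (normal_pdf A 1 x + normal_pdf (- A) 1 x))
  + al * (`|x| `^ s * P).
Proof.
move=> A0 al0 be0 P0 Hy.
set S := Num.sqrt (2 * pi).
set f := gauss_phi x.
set Eu := expR (A ^+ 2 / 2).
set E := expR (- (A ^+ 2) / 2).
set N := normal_pdf A 1 x + normal_pdf (- A) 1 x.
set D2 := (P - f) ^+ 2.
set aD := `|P - f|.
set Xs := `|x| `^ s.
have S1 : 1 <= S by exact: SS_ge1.
have f0 : 0 < f by exact: gauss_phi_gt0.
have f1 : f <= 1 by exact: gauss_phi_le1.
have Eu0 : 0 <= Eu by exact: expR_ge0.
have E0 : 0 <= E by exact: expR_ge0.
have N0 : 0 <= N by rewrite addr_ge0 // normal_pdf_ge0.
have D20 : 0 <= D2 by exact: sqr_ge0.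
have aD0 : 0 <= aD by exact: normr_ge0.
have Xs0 : 0 <= Xs by exact: powR_ge0.
have EN0 : 0 <= E * N by exact: mulr_ge0.
have SEu : 0 <= S * Eu by rewrite mulr_ge0 // (le_trans ler01 S1).
have XP0 : 0 <= Xs * P by exact: mulr_ge0.
have G0 : 0 <= (S * Eu + 2) * D2 + (1 + S + be) * aD + (2 + S + be) * (E * N)
    + al * (Xs * P).
  have t1 : 0 <= (S * Eu + 2) * D2 by rewrite mulr_ge0 //; lra.
  have t2 : 0 <= (1 + S + be) * aD by rewrite mulr_ge0 //; lra.
  have t3 : 0 <= (2 + S + be) * (E * N) by rewrite mulr_ge0 //; lra.
  have t4 : 0 <= al * (Xs * P) by rewrite mulr_ge0.
  lra.
have [P00|Pn0] := eqVneq P 0; first by rewrite P00 mul0r; move: G0; rewrite P00.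
have Pp : 0 < P by rewrite lt_neqAle eq_sym Pn0.
have Pf0 : 0 < P / f by rewrite divr_gt0.
have dle : P - f <= aD by exact: ler_norm.
have dle' : f - P <= aD by rewrite /aD distrC; exact: ler_norm.
case: (lerP `|x| A) => hx.
- have hl : ln (P / f) <= P / f - 1.
    have := @le_ln1Dx _ (P / f - 1).
    rewrite addrCA subrr addr0; apply; lra.
  have h1 : P * ln (P / f) <= P * (P / f - 1) by rewrite ler_wpM2l // ltW.
  have h2 : P * (P / f - 1) = D2 * f^-1 + (P - f).
    rewrite /D2; field; by rewrite gt_eqF.
  have h3 : f^-1 <= S * Eu.
    rewrite /f inv_gauss_phi ler_wpM2l ?(le_trans ler01 S1) // ler_expR.
    have [hx1 hx2] : - A <= x /\ x <= A by move: hx; rewrite ler_norml => /andP.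
    rewrite ler_pM2r //; nra.
  have h4 : D2 * f^-1 <= D2 * (S * Eu) by rewrite ler_wpM2l.
  have h5 : 0 <= (2 + S + be) * (E * N) by rewrite mulr_ge0 //; lra.
  have h6 : 0 <= al * (Xs * P) by rewrite mulr_ge0.
  have h7 : aD <= (1 + S + be) * aD by rewrite ler_peMl //; lra.
  nra.
- have hl : ln (P / f) = ln P + ln S + x ^+ 2 / 2.
    rewrite ln_div ?posrE // /f ln_gauss_phi; lra.
  have lP : ln P <= P by exact/ltW/ln_sublinear.
  have lS : ln S <= S by apply/ltW/ln_sublinear; lra.
  have hy : x ^+ 2 / 2 <= al * Xs + be := Hy hx.
  have h1 : P * ln (P / f) <= P * (P + S + al * Xs + be).
    apply: ler_wpM2l; first exact: ltW. rewrite hl; lra.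
  have h2 : P ^+ 2 <= 2 * D2 + 2 * f.
    have : f ^+ 2 <= f by rewrite expr2 ler_piMl // ltW.
    have := sqr_ge0 (P - 2 * f); rewrite /D2; nra.
  have hf : f <= E * N by exact: gauss_tail.
  have h3 : (2 + S + be) * f <= (2 + S + be) * (E * N) by rewrite ler_wpM2l //; lra.
  have h4 : (S + be) * P <= (S + be) * aD + (S + be) * f.
    by rewrite -mulrDr ler_wpM2l //; lra.
  have h5 : 2 * D2 <= (S * Eu + 2) * D2 by rewrite ler_wpM2r //; lra.
  have h6 : (S + be) * aD <= (1 + S + be) * aD by rewrite ler_wpM2r //; lra.
  have e : P * (P + S + al * Xs + be) = P ^+ 2 + (S + be) * P + al * (Xs * P).
    by rewrite expr2; ring.
  lra.
Qed.

Lemma le_int_ge0 (R : realType) (f g : R -> R) :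
  measurable_fun [set: R] f -> measurable_fun [set: R] g ->
  (forall x, f x <= g x) -> (forall x, 0 <= g x) ->
  (\int[@lebesgue_measure R]_x (f x)%:E <= \int[@lebesgue_measure R]_x (g x)%:E)%E.
Proof.
move=> mf mg fg g0.
rewrite integralE.
apply: (@le_trans _ _ (\int[@lebesgue_measure R]_x ((EFin \o f)^\+ x))%E).
  have h0 : (0 <= \int[@lebesgue_measure R]_x ((EFin \o f)^\- x))%E.
    by apply: integral_ge0 => x _; exact: funeneg_ge0.
  have h := @leeB R _ _ (\int[@lebesgue_measure R]_x ((EFin \o f)^\- x))%E 0%E
    (lexx (\int[@lebesgue_measure R]_x ((EFin \o f)^\+ x))%E) h0.
  by rewrite sube0 in h.
apply: ge0_le_integral => //.
- by apply: measurable_funepos; apply/measurable_EFinP; exact: mf.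
- by apply/measurable_EFinP; exact: mg.
- move=> x _; rewrite funeposE /= ge_max !lee_fin fg /=; exact: g0.
Qed.

Lemma powR_sq_le (R : realType) (R0 s x : R) : 0 < R0 -> 2 < s -> R0 <= `|x| ->
  x ^+ 2 <= R0 `^ (2 - s) * `|x| `^ s.
Proof.
move=> R00 s2 hx.
have x0 : 0 < `|x| by apply: lt_le_trans hx.
have e1 : `|x| `^ s = `|x| `^ (s - 2) * x ^+ 2.
  rewrite -real_normK ?num_real // -powR_mulrn ?normr_ge0 // -powRD.
    by rewrite subrK.
  by apply/implyP => _; rewrite gt_eqF.
have e2 : R0 `^ (2 - s) * R0 `^ (s - 2) = 1.
  rewrite -powRD; last by apply/implyP => _; rewrite gt_eqF.
  by rewrite addrC subrKA subrr powRr0.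
have h : R0 `^ (s - 2) <= `|x| `^ (s - 2).
  apply: ge0_ler_powR => //; first by rewrite subr_ge0 ltW.
  by rewrite nnegrE ltW.
have p0 : 0 <= R0 `^ (2 - s) by exact: powR_ge0.
have x20 : 0 <= x ^+ 2 by exact: sqr_ge0.
rewrite e1; apply: (@le_trans _ _ (R0 `^ (2 - s) * (R0 `^ (s - 2) * x ^+ 2))).
  by rewrite mulrA e2 mul1r.
by rewrite ler_wpM2l // ler_wpM2r.
Qed.

Lemma powR_sq_le2 (R : realType) (R0 s x : R) : 0 < R0 -> 2 < s ->
  x ^+ 2 <= R0 `^ (2 - s) * `|x| `^ s + R0 ^+ 2.
Proof.
move=> R00 s2.
have p0 : 0 <= R0 `^ (2 - s) * `|x| `^ s by rewrite mulr_ge0 // powR_ge0.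
case: (lerP R0 `|x|) => hx.
- have := @powR_sq_le _ _ _ _ R00 s2 hx; have := sqr_ge0 R0; lra.
- have : x ^+ 2 <= R0 ^+ 2.
    by rewrite -real_normK ?num_real // lerXn2r // ?nnegrE ?normr_ge0 ?ltW.
  lra.
Qed.

Lemma powR_pos (R : realType) (a r : R) : 0 < a -> a `^ r = expR (r * ln a).
Proof. by move=> a0; rewrite /powR gt_eqF. Qed.

Lemma optim_eq (R : realType) (mr T s : R) : 0 < mr -> 0 < T -> 2 < s ->
  (expR ((ln mr - ln T) / s)) ^+ 2 * T + (expR ((ln mr - ln T) / s)) `^ (2 - s) * mr
  = 2 * (mr `^ (2 / s) * T `^ (1 - 2 / s)).
Proof.
move=> m0 T0 s2.
have s0 : s != 0 by rewrite gt_eqF // (lt_trans _ s2).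
rewrite powR_pos ?expR_gt0 // expRK !powR_pos //.
rewrite -expRM_natl -{2}(lnK (x := T)) ?posrE // -{3}(lnK (x := mr)) ?posrE //.
rewrite -!expRD.
have -> : 2%:R * ((ln mr - ln T) / s) + ln T = 2 / s * ln mr + (1 - 2 / s) * ln T.
  by field.
have -> : (2 - s) * ((ln mr - ln T) / s) + ln mr = 2 / s * ln mr + (1 - 2 / s) * ln T.
  by field.
ring.
Qed.

Lemma int2 (R : realType) (u v : R -> R) :
  (forall x, 0 <= u x) -> (forall x, 0 <= v x) ->
  measurable_fun [set: R] u -> measurable_fun [set: R] v ->
  (\int[@lebesgue_measure R]_x (u x + v x)%:E =
   \int[@lebesgue_measure R]_x (u x)%:E + \int[@lebesgue_measure R]_x (v x)%:E)%E.
Proof.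
move=> u0 v0 mu mv.
under eq_integral do rewrite EFinD.
apply: ge0_integralD => //.
- by move=> x _; rewrite lee_fin.
- by apply/measurable_EFinP; exact: mu.
- by move=> x _; rewrite lee_fin.
- by apply/measurable_EFinP; exact: mv.
Qed.

Lemma intZ (R : realType) (k : R) (u : R -> R) :
  0 <= k -> (forall x, 0 <= u x) -> measurable_fun [set: R] u ->
  (\int[@lebesgue_measure R]_x (k * u x)%:E =
   k%:E * \int[@lebesgue_measure R]_x (u x)%:E)%E.
Proof.
move=> k0 u0 mu.
under eq_integral do rewrite EFinM.
apply: ge0_integralZl => //.
- by apply/measurable_EFinP; exact: mu.
- by move=> x _; rewrite lee_fin.
Qed.

Theorem theorem2p3 (R : realType) (p : R -> R) (s : R) :
  is_density p ->
  (@lebesgue_measure R).-integrable [set: R] (fun x => (x * p x)%:E) ->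
  (\int[@lebesgue_measure R]_x (x * p x)%:E = 0)%E ->
  (\int[@lebesgue_measure R]_x (x ^+ 2 * p x)%:E = 1)%E ->
  2 < s ->
  (abs_moment p s < +oo)%E ->
  exists C1 C2 C3 : R, 0 < C1 /\ 0 < C2 /\ 0 < C3 /\
    forall A : R, 0 < A ->
      let d := fun x => p x - gauss_phi x in
      let t := (LqR 1%:E d + (expR (- (A ^+ 2) / 2))%:E)%E in
      (KLgauss p <=
         C1%:E * (expR (A ^+ 2 / 2))%:E * (LqR 2%:E d) `^ 2
       + (C2%:E + LqR +oo d) * t
       + C3%:E * (abs_moment p s) `^ (2 / s) * t `^ (1 - 2 / s))%E.
Proof.
move=> [mp [p0 _]] _ _ _ s2 mfin.
set S := Num.sqrt (2 * pi : R).
have S1 : 1 <= S := SS_ge1 R.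
exists (S + 2), (2 * (2 + S)), 2.
split; first lra. split; first lra. split; first lra.
move=> A A0; cbv zeta.
set d := (fun x : R => p x - gauss_phi x).
set E := expR (- (A ^+ 2) / 2).
set Eu := expR (A ^+ 2 / 2).
have Eu1 : 1 <= Eu by rewrite /Eu -expR0 ler_expR divr_ge0 // sqr_ge0.
have E0 : 0 < E by exact: expR_gt0.
have s0 : 0 < s by lra.
have md : measurable_fun [set: R] d.
  by apply: measurable_funB => //; exact: measurable_gauss_phi.
have m0 : (0 <= abs_moment p s)%E.
  by apply: integral_ge0 => x _; rewrite lee_fin mulr_ge0 ?powR_ge0.
have [mr mE] : exists mr, abs_moment p s = mr%:E.
  move: m0 mfin; case: (abs_moment p s) => [r| |] //; by exists r.
have mr0 : 0 <= mr by rewrite -lee_fin -mE.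
have hL1 : (LqR 1%:E d = \int[@lebesgue_measure R]_x (`|d x|)%:E)%E.
  by rewrite /LqR Lnorm1; apply: eq_integral => x _; rewrite abse_EFin.
have L10 : (0 <= \int[@lebesgue_measure R]_x (`|d x|)%:E)%E.
  by apply: integral_ge0 => x _; rewrite lee_fin.
have hL2 : (LqR 2%:E d `^ 2 = \int[@lebesgue_measure R]_x ((d x) ^+ 2)%:E)%E.
  rewrite /LqR poweR_Lnorm; last by [].
  apply: eq_integral => x _.
  by rewrite abse_EFin poweR_EFin powR_mulrn // real_normK // num_real.
rewrite hL1 mE.
have Linf0 : (0 <= LqR +oo d)%E by exact: Lnorm_ge0.
case hI : (\int[@lebesgue_measure R]_x (`|d x|)%:E)%E => [l1| |]; rewrite hI in L10 => //; last first.
  have Y30 : (0 <= 2 * mr%:E `^ (2 / s) * (+oo + E%:E) `^ (1 - 2 / s))%E.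
    by rewrite mule_ge0 ?poweR_ge0 // mule_ge0 // poweR_ge0.
  have X10 : (0 <= (S + 2)%:E * Eu%:E * LqR 2%:E d `^ 2)%E.
    by rewrite mule_ge0 ?poweR_ge0 // -EFinM lee_fin mulr_ge0 //; lra.
  have C20 : (0 < (2 * (2 + S))%:E + LqR +oo d)%E.
    apply: (lt_le_trans _ (leeDl _ Linf0)); rewrite lte_fin; lra.
  rewrite addye // gt0_muley // addey; last first.
    by apply/negP => /eqP h; rewrite h in X10.
  rewrite addye ?leey //.
  by apply/negP => /eqP h; rewrite h in Y30.
rewrite lee_fin in L10.
have T0 : 0 < l1 + 2 * E by lra.
have r0 : 0 <= 1 - 2 / s.
  rewrite subr_ge0 ler_pdivrMr //; lra.
have [al [be [al0 [be0 [Hy Hopt]]]]] : exists al be : R, 0 <= al /\ 0 <= be /\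
    (forall x : R, A < `|x| -> x ^+ 2 / 2 <= al * `|x| `^ s + be) /\
    be * (l1 + 2 * E) + al * mr <= 2 * (mr `^ (2 / s) * (l1 + E) `^ (1 - 2 / s)).
  have P0 : 0 <= 2 * (mr `^ (2 / s) * (l1 + E) `^ (1 - 2 / s)).
    by rewrite mulr_ge0 // mulr_ge0 // powR_ge0.
  have [->|mrn0] := eqVneq mr 0.
    exists (A `^ (2 - s) / 2), 0; split; first by rewrite divr_ge0 ?powR_ge0.
    split => //; split; last by rewrite !mulr0 mul0r addr0 mulr_ge0 // mulr_ge0 // powR_ge0.
    move=> x Ax; rewrite addr0 ler_pdivrMr // mulrAC divfK //.
    exact: powR_sq_le (ltW Ax).
  have mrp : 0 < mr by rewrite lt_neqAle eq_sym mrn0.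
  set R0 := expR ((ln mr - ln (l1 + 2 * E)) / s).
  have R00 : 0 < R0 by exact: expR_gt0.
  exists (R0 `^ (2 - s) / 2), (R0 ^+ 2 / 2).
  split; first by rewrite divr_ge0 ?powR_ge0.
  split; first by rewrite divr_ge0 ?sqr_ge0.
  split.
    move=> x _; have := @powR_sq_le2 R R0 s x R00 s2; lra.
  have := @optim_eq R mr (l1 + 2 * E) s mrp T0 s2; rewrite -/R0 => heq.
  have h1 : (l1 + 2 * E) `^ (1 - 2 / s) <= (2 * (l1 + E)) `^ (1 - 2 / s).
    apply: ge0_ler_powR => //; rewrite ?nnegrE; lra.
  have h2 : (2 * (l1 + E)) `^ (1 - 2 / s) <= 2 * (l1 + E) `^ (1 - 2 / s).
    rewrite powRM; [|lra|lra].
    rewrite ler_pM2r ?powR_gt0 //; last lra.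
    have : 0 <= 2 / s by rewrite divr_ge0 // ltW.
    move=> ?; apply: ler1_powR; lra.
  have h3 : mr `^ (2 / s) * (l1 + 2 * E) `^ (1 - 2 / s) <=
            mr `^ (2 / s) * (2 * (l1 + E) `^ (1 - 2 / s)).
    by rewrite ler_wpM2l ?powR_ge0 // (le_trans h1 h2).
  have e2 : R0 ^+ 2 / 2 * (l1 + 2 * E) + R0 `^ (2 - s) / 2 * mr =
            mr `^ (2 / s) * (l1 + 2 * E) `^ (1 - 2 / s).
    have e3 := heq; apply: (mulfI (x := 2)); first by rewrite pnatr_eq0.
    by rewrite -e3; field.
  rewrite e2; apply: (le_trans h3); rewrite mulrCA; lra.
pose N := fun x => normal_pdf A 1 x + normal_pdf (- A) 1 x.
pose u1 := fun x => (S * Eu + 2) * (d x) ^+ 2.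
pose u2 := fun x => (1 + S + be) * `|d x|.
pose u3 := fun x => (2 + S + be) * (E * N x).
pose u4 := fun x => al * (`|x| `^ s * p x).
have mN : measurable_fun [set: R] N.
  by apply: measurable_funD; exact: measurable_normal_pdf.
have md2 : measurable_fun [set: R] (fun x => d x ^+ 2) by exact: measurable_funX.
have mad : measurable_fun [set: R] (fun x => `|d x|).
  by apply: measurableT_comp => //; exact: normr_measurable.
have mX : measurable_fun [set: R] (fun x => `|x| `^ s * p x).
  apply: measurable_funM => //; apply: (measurableT_comp (measurable_powR s)) => //.
have N0 : forall x, 0 <= N x by move=> x; rewrite addr_ge0 // normal_pdf_ge0.
have SEu : 0 <= S * Eu by rewrite mulr_ge0 //; lra.
have u10 : forall x, 0 <= u1 x by move=> x; rewrite mulr_ge0 ?sqr_ge0 //; lra.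
have u20 : forall x, 0 <= u2 x by move=> x; rewrite mulr_ge0 //; lra.
have u30 : forall x, 0 <= u3 x.
  by move=> x; rewrite mulr_ge0 ?mulr_ge0 //; [lra|lra].
have u40 : forall x, 0 <= u4 x by move=> x; rewrite mulr_ge0 // mulr_ge0 // powR_ge0.
have mu1 : measurable_fun [set: R] u1 by apply: measurable_funM.
have mu2 : measurable_fun [set: R] u2 by apply: measurable_funM.
have mu3 : measurable_fun [set: R] u3 by apply: measurable_funM => //; apply: measurable_funM.
have mu4 : measurable_fun [set: R] u4 by apply: measurable_funM.
have hKL : (KLgauss p <= \int[@lebesgue_measure R]_x (u1 x + u2 x + u3 x + u4 x)%:E)%E.
  rewrite /KLgauss; apply: le_int_ge0.
  - apply: measurable_funM => //; apply: measurableT_comp; first exact: measurable_ln.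
    have -> : (fun x => p x / gauss_phi x) = (fun x => p x * (S * expR (x ^+ 2 / 2))).
      by apply/funext => x; rewrite inv_gauss_phi.
    apply: measurable_funM => //; apply: measurable_funM => //.
    apply: measurableT_comp; first exact: measurable_expR.
    apply: measurable_funM => //; exact: measurable_funX.
  - by apply: measurable_funD => //; apply: measurable_funD => //; apply: measurable_funD.
  - move=> x; exact: (@pointwise R A al be s (p x) x (ltW A0) al0 be0 (p0 x) (Hy x)).
  - by move=> x; rewrite !addr_ge0.
have IN : (\int[@lebesgue_measure R]_x (N x)%:E = (2%R)%:E)%E.
  rewrite (@int2 R (normal_pdf A 1) (normal_pdf (- A) 1)) //;
    [|exact: normal_pdf_ge0|exact: normal_pdf_ge0|exact: measurable_normal_pdf|exact: measurable_normal_pdf].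
  by rewrite !integral_normal_pdf -EFinD.
have k1 : 0 <= S * Eu + 2 by lra.
have k2 : 0 <= 1 + S + be by lra.
have k3 : 0 <= 2 + S + be by lra.
have EN0 : forall x, 0 <= E * N x by move=> x; rewrite mulr_ge0 // ltW.
have mEN : measurable_fun [set: R] (fun x => E * N x) by apply: measurable_funM.
have X0 : forall x, 0 <= `|x| `^ s * p x by move=> x; rewrite mulr_ge0 // powR_ge0.
have I1 : (\int[@lebesgue_measure R]_x (u1 x)%:E = (S * Eu + 2)%R%:E * LqR 2%:E d `^ 2)%E.
  by rewrite hL2 (@intZ R (S * Eu + 2) (fun x => d x ^+ 2) k1 (fun x => sqr_ge0 (d x)) md2).
have I2 : (\int[@lebesgue_measure R]_x (u2 x)%:E = ((1 + S + be) * l1)%R%:E)%E.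
  by rewrite (@intZ R (1 + S + be) (fun x => `|d x|) k2 (fun x => normr_ge0 (d x)) mad) hI EFinM.
have I3 : (\int[@lebesgue_measure R]_x (u3 x)%:E = ((2 + S + be) * (E * 2))%R%:E)%E.
  rewrite (@intZ R (2 + S + be) (fun x => E * N x) k3 EN0 mEN).
  by rewrite (@intZ R E N (ltW E0) N0 mN) IN !EFinM.
have I4 : (\int[@lebesgue_measure R]_x (u4 x)%:E = (al * mr)%R%:E)%E.
  rewrite (@intZ R al (fun x => `|x| `^ s * p x) al0 X0 mX).
  by rewrite -/(abs_moment p s) mE EFinM.
have I : (\int[@lebesgue_measure R]_x (u1 x + u2 x + u3 x + u4 x)%:E =
    (S * Eu + 2)%R%:E * LqR 2%:E d `^ 2 + ((1 + S + be) * l1)%R%:E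
    + ((2 + S + be) * (E * 2))%R%:E + (al * mr)%R%:E)%E.
  rewrite (@int2 R (fun x => u1 x + u2 x + u3 x) u4) //; last 2 first.
  - by move=> x; rewrite !addr_ge0.
  - by apply: measurable_funD => //; apply: measurable_funD.
  rewrite (@int2 R (fun x => u1 x + u2 x) u3) //; last 2 first.
  - by move=> x; rewrite !addr_ge0.
  - by apply: measurable_funD.
  by rewrite (@int2 R u1 u2) // I1 I2 I3 I4.
apply: (le_trans hKL); rewrite I.
rewrite -!addeA; apply: leeD.
  rewrite -EFinM; apply: lee_wpmul2r; first exact: poweR_ge0.
  rewrite lee_fin; lra.
rewrite -!EFinD.
have lE0 : 0 <= l1 + E by lra.
apply: (@le_trans _ _ (((2 * (2 + S)) * (l1 + E))%R%:E
   + (2 * (mr `^ (2 / s) * (l1 + E) `^ (1 - 2 / s)))%R%:E)%E).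
  rewrite -EFinD lee_fin.
  have : 0 <= S * l1 by rewrite mulr_ge0 //; lra.
  have : 0 <= be * E by rewrite mulr_ge0 // ltW.
  lra.
apply: leeD.
  rewrite EFinM; apply: lee_wpmul2r; first by rewrite lee_fin.
  exact: leeDl.
by rewrite !poweR_EFin -!EFinM mulrA.
Qed.
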